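(* Let $\ell^{\infty}$ be the space of bounded real sequences $x=(x_i)_{i\in\mathbb{N}}$, and for $p\in(0,\infty)$, $n\in\mathbb{N}$ let $$\|x\|_{\infty,p,n}:=\sup_{j\in\mathbb{N}}\Big(\frac{1}{n}\sum_{i=j}^{j+(n-1)}|x_i|^{p}\Big)^{1/p}.$$ Let $d\in\mathbb{N}$, $\alpha_1,\dots,\alpha_d\in\mathbb{N}$ and $n=\sum_{l=1}^{d}\alpha_l$. Then for all $p\in[1,\infty)$ and all $x\in\ell^{\infty}$, $$\|x\|_{\infty,p,n}^{p}\leq \sum_{l=1}^{d}\frac{\alpha_l}{n}\|x\|_{\infty,p,\alpha_l}^{p}.$$
   Context: $\mathbb{N}=\{1,2,3,\dots\}$. *)

(* Defs.v *)
From Stdlib Require Import Reals.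
From Coquelicot Require Import Coquelicot.
Open Scope R_scope.

(* a^q for a >= 0 and real q > 0, with the convention 0^q = 0. *)
Definition rpow (a q : R) : R := if Req_EM_T a 0 then 0 else Rpower a q.

(* Sequences are x : nat -> R, with x i the i-th term for i in N = {1,2,...}
   (the value x 0 is irrelevant). *)
Definition bounded_seq (x : nat -> R) : Prop :=
  exists M : R, forall i : nat, (1 <= i)%nat -> Rabs (x i) <= M.

Definition window_avg (x : nat -> R) (p : R) (n j : nat) : R :=
  / INR n * sum_n_m (fun i => rpow (Rabs (x i)) p) j (j + (n - 1)).

(* ||x||_{inf,p,n} = sup_{j in N} (window_avg)^{1/p}; j ranges over j >= 1
   (Sup_seq ranges over k : nat, we take j = k+1). *)
Definition norm_ipn (x : nat -> R) (p : R) (n : nat) : R :=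
  real (Sup_seq (fun k => rpow (window_avg x p n (S k)) (/ p))).

Fixpoint nsum1 (a : nat -> nat) (d : nat) : nat :=
  match d with O => O | S d' => (nsum1 a d' + a d)%nat end.

(* Main.v *)
Require Import Defs.
From Stdlib Require Import Reals Lra Lia.
From Coquelicot Require Import Coquelicot.
Open Scope R_scope.

Lemma rpow_ge0 a q : 0 <= rpow a q.
Proof. unfold rpow. destruct (Req_EM_T a 0). lra. unfold Rpower. left; apply exp_pos. Qed.

Lemma rpow_inv a p : 0 <= a -> 0 < p -> rpow (rpow a (/p)) p = a.
Proof.
  intros Ha Hp. unfold rpow at 2. destruct (Req_EM_T a 0) as [->|Hn].
  - unfold rpow. destruct (Req_EM_T 0 0); lra.
  - assert (Hpos : 0 < Rpower a (/p)) by (unfold Rpower; apply exp_pos).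
    unfold rpow. destruct (Req_EM_T (Rpower a (/p)) 0). lra.
    rewrite Rpower_mult. rewrite Rinv_l by lra. apply Rpower_1. lra.
Qed.

Lemma rpow_le a b q : 0 <= a <= b -> 0 < q -> rpow a q <= rpow b q.
Proof.
  intros [Ha Hab] Hq. unfold rpow at 1. destruct (Req_EM_T a 0). apply rpow_ge0.
  unfold rpow. destruct (Req_EM_T b 0). lra. apply Rle_Rpower_l; lra.
Qed.

Lemma sum_le_loc (a b : nat -> R) n m :
  (forall k, (n <= k <= m)%nat -> a k <= b k) -> sum_n_m a n m <= sum_n_m b n m.
Proof.
  intros H.
  rewrite (sum_n_m_ext_loc b (fun k => if andb (Nat.leb n k) (Nat.leb k m) then b k else a k)).
  - apply sum_n_m_le. intros k. destruct (Nat.leb n k) eqn:E1; destruct (Nat.leb k m) eqn:E2; simpl; try lra.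
    apply H. apply Nat.leb_le in E1, E2. lia.
  - intros k Hk. rewrite (proj2 (Nat.leb_le n k)) by lia. rewrite (proj2 (Nat.leb_le k m)) by lia. reflexivity.
Qed.

Lemma window_ge0 x p m j : 0 <= window_avg x p m j.
Proof.
  unfold window_avg. apply Rmult_le_pos.
  destruct m. simpl. rewrite Rinv_0. lra. left. apply Rinv_0_lt_compat. apply lt_0_INR. lia.
  replace 0 with (sum_n_m (fun _ : nat => 0) j (j + (m - 1))).
  apply sum_n_m_le. intros; apply rpow_ge0.
  rewrite sum_n_m_const. lra.
Qed.

Lemma window_bound x p : bounded_seq x -> 0 < p ->
  exists C, forall m j, (1 <= m)%nat -> (1 <= j)%nat -> window_avg x p m j <= C.
Proof.
  intros [M HM] Hp. exists (rpow M p). intros m j Hm Hj.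
  unfold window_avg.
  apply Rle_trans with (/ INR m * sum_n_m (fun _ => rpow M p) j (j + (m - 1))).
  - apply Rmult_le_compat_l. left. apply Rinv_0_lt_compat. apply lt_0_INR. lia.
    apply sum_le_loc. intros k Hk. apply rpow_le; [|lra]. split. apply Rabs_pos. apply HM. lia.
  - rewrite sum_n_m_const. replace (S (j + (m - 1)) - j)%nat with m by lia.
    rewrite <- Rmult_assoc. rewrite Rinv_l. lra. apply not_0_INR. lia.
Qed.

Lemma norm_props x p m : bounded_seq x -> 0 < p -> (1 <= m)%nat ->
  0 <= norm_ipn x p m /\
  forall j, (1 <= j)%nat -> window_avg x p m j <= rpow (norm_ipn x p m) p.
Proof.
  intros Hx Hp Hm. destruct (window_bound x p Hx Hp) as [C HC].
  set (f := fun k => rpow (window_avg x p m (S k)) (/ p)).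
  assert (Hub : forall k, f k <= rpow (Rmax C 0) (/p)).
  { intros k. unfold f. apply rpow_le. split. apply window_ge0.
    apply Rle_trans with C. apply HC; lia. apply Rmax_l. apply Rinv_0_lt_compat; lra. }
  assert (Hfin : exists r, Sup_seq f = Finite r /\ 0 <= r /\ forall k, f k <= r).
  { assert (H0 := Sup_seq_minor_le f (f 0%nat) 0%nat (Rle_refl _)).
    destruct (Sup_seq f) as [r| |] eqn:E.
    - exists r. split; auto. split. simpl in H0. eapply Rle_trans; [|exact H0]. apply rpow_ge0.
      intros k. assert (Hk := Sup_seq_minor_le f (f k) k (Rle_refl _)). rewrite E in Hk. exact Hk.
    - exfalso. assert (Hl : Rbar_lt (rpow (Rmax C 0) (/p)) (Sup_seq f)) by (rewrite E; simpl; auto).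
      apply Sup_seq_minor_lt in Hl. destruct Hl as [k Hk]. simpl in Hk. specialize (Hub k). lra.
    - simpl in H0. contradiction. }
  destruct Hfin as [r [E [Hr Hk]]].
  unfold norm_ipn. unfold f in E. rewrite E. simpl. split; auto.
  intros j Hj. destruct j. lia.
  rewrite <- (rpow_inv (window_avg x p m (S j)) p) by (apply window_ge0 || lra).
  apply rpow_le; auto. split. apply rpow_ge0. apply Hk.
Qed.

Lemma norm_upper x p m B : bounded_seq x -> 0 < p -> (1 <= m)%nat -> 0 <= B ->
  (forall j, (1 <= j)%nat -> window_avg x p m j <= B) -> rpow (norm_ipn x p m) p <= B.
Proof.
  intros Hx Hp Hm HB H.
  destruct (norm_props x p m Hx Hp Hm) as [Hn _].
  rewrite <- (rpow_inv B p HB Hp). apply rpow_le; auto. split; auto.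
  set (f := fun k => rpow (window_avg x p m (S k)) (/ p)).
  unfold norm_ipn. change (fun k => rpow (window_avg x p m (S k)) (/ p)) with f.
  assert (Hb : forall k, f k <= rpow B (/p)).
  { intros k. apply rpow_le. split. apply window_ge0. apply H; lia. apply Rinv_0_lt_compat; lra. }
  unfold f in Hb. clear f.
  destruct (Sup_seq (fun k => rpow (window_avg x p m (S k)) (/ p))) as [r| |] eqn:E; simpl.
  - destruct (Rle_lt_dec r (rpow B (/p))) as [Hle|Hlt]. exact Hle. exfalso.
    assert (Hl : Rbar_lt (rpow B (/p)) (Sup_seq (fun k => rpow (window_avg x p m (S k)) (/ p)))) by (rewrite E; exact Hlt).
    apply Sup_seq_minor_lt in Hl. destruct Hl as [k Hk]. simpl in Hk. specialize (Hb k). lra.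
  - apply rpow_ge0.
  - apply rpow_ge0.
Qed.

Lemma nsum1_ge a D : (forall l, (1 <= l <= D)%nat -> (1 <= a l)%nat) -> (D <= nsum1 a D)%nat.
Proof. induction D; simpl; intros H. lia. assert (1 <= a (S D))%nat by (apply H; lia).
  assert (D <= nsum1 a D)%nat by (apply IHD; intros; apply H; lia). lia. Qed.

Lemma split_sum (g : nat -> R) a D : (1 <= D)%nat ->
  (forall l, (1 <= l <= D)%nat -> (1 <= a l)%nat) -> forall j,
  sum_n_m g j (j + (nsum1 a D - 1)) =
  sum_n_m (fun l => sum_n_m g (j + nsum1 a (l - 1)) (j + nsum1 a (l - 1) + (a l - 1))) 1 D.
Proof.
  induction D as [|D IH]; intros HD Ha j. lia.
  destruct D.
  - rewrite sum_n_n. simpl. replace (j+0)%nat with j by lia. reflexivity.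
  - rewrite sum_n_Sm by lia. rewrite <- IH by (lia || (intros; apply Ha; lia)).
    replace (S (S D) - 1)%nat with (S D) by lia.
    assert (H1 := nsum1_ge a (S D) ltac:(intros; apply Ha; lia)).
    assert (H2 : (1 <= a (S (S D)))%nat) by (apply Ha; lia).
    change (nsum1 a (S (S D))) with (nsum1 a (S D) + a (S (S D)))%nat.
    rewrite (sum_n_m_Chasles g j (j + (nsum1 a (S D) - 1))) by lia.
    replace (S (j + (nsum1 a (S D) - 1))) with (j + nsum1 a (S D))%nat by lia.
    replace (j + (nsum1 a (S D) + a (S (S D)) - 1))%nat with (j + nsum1 a (S D) + (a (S (S D)) - 1))%nat by lia.
    reflexivity.
Qed.

Theorem lemma1p2 (d : nat) (alpha : nat -> nat)
  (Hd : (1 <= d)%nat)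
  (Halpha : forall l : nat, (1 <= l <= d)%nat -> (1 <= alpha l)%nat)
  (p : R) (Hp : 1 <= p) (x : nat -> R) (Hx : bounded_seq x) :
  let n := nsum1 alpha d in
  rpow (norm_ipn x p n) p
    <= sum_n_m (fun l => INR (alpha l) / INR n * rpow (norm_ipn x p (alpha l)) p) 1 d.
Proof.
  intros n.
  assert (Hn : (1 <= n)%nat) by (pose proof (nsum1_ge alpha d Halpha); unfold n; lia).
  assert (HnR : 0 < INR n) by (apply lt_0_INR; lia).
  assert (Hp0 : 0 < p) by lra.
  apply norm_upper; auto.
  - replace 0 with (sum_n_m (fun _ : nat => 0) 1 d) by (rewrite sum_n_m_const; lra).
    apply sum_n_m_le. intros l. apply Rmult_le_pos; [|apply rpow_ge0].
    unfold Rdiv. apply Rmult_le_pos. apply pos_INR. left; apply Rinv_0_lt_compat; lra.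
  - intros j Hj. unfold window_avg at 1. unfold n at 2. rewrite split_sum by auto.
    rewrite (sum_n_m_ext_loc _ (fun l => INR (alpha l) * window_avg x p (alpha l) (j + nsum1 alpha (l - 1)))).
    2:{ intros l Hl. unfold window_avg. change (sum_n_m (fun i => rpow (Rabs (x i)) p) (j + nsum1 alpha (l - 1)) (j + nsum1 alpha (l - 1) + (alpha l - 1)) = INR (alpha l) * (/ INR (alpha l) * sum_n_m (fun i => rpow (Rabs (x i)) p) (j + nsum1 alpha (l - 1)) (j + nsum1 alpha (l - 1) + (alpha l - 1)))). rewrite <- Rmult_assoc. rewrite Rinv_r. symmetry; apply Rmult_1_l.
        apply not_0_INR. assert (1 <= alpha l)%nat by (apply Halpha; lia). lia. }
    rewrite (sum_n_m_ext (fun l => INR (alpha l) / INR n * rpow (norm_ipn x p (alpha l)) p) (fun l => mult (/ INR n) (INR (alpha l) * rpow (norm_ipn x p (alpha l)) p))).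
    2:{ intros l. change (INR (alpha l) / INR n * rpow (norm_ipn x p (alpha l)) p = / INR n * (INR (alpha l) * rpow (norm_ipn x p (alpha l)) p)). unfold Rdiv. ring. }
    rewrite (sum_n_m_mult_l (K:=R_Ring)). change (@mult R_Ring) with Rmult.
    apply Rmult_le_compat_l. left; apply Rinv_0_lt_compat; lra.
    apply sum_le_loc. intros l Hl. apply Rmult_le_compat_l. apply pos_INR.
    destruct (norm_props x p (alpha l) Hx Hp0 (Halpha l Hl)) as [_ H]. apply H. lia.
Qed.
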